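(* Let $d\ge 1$, $T>0$, let $U:\mathbb{R}^d\to\mathbb{R}$ be continuously differentiable, and let $G:\mathbb{R}^d\to\mathbb{R}^{d\times d}$ be continuous with $G(y)$ symmetric and $v^{\intercal}G(y)v\ge v^{\intercal}\Gamma v>0$ for all $y\in\mathbb{R}^d$ and all $v\neq 0$, where $\Gamma$ is a fixed symmetric positive definite matrix. Consider the gradient system $G(y(t))\dot y(t)=-\nabla U(y(t))$, $y(0)=y_0\in\mathbb{R}^d$. Let $\varphi_0,\ldots,\varphi_{r-1}$ be sufficiently smooth, linearly independent real functions on $[0,T]$, let $0<h\le T$, and let $X_h,Y_h$, $\mathcal{P}_h$ be as described in the context. Suppose $\tilde u\in X_h$ satisfies $\tilde u(0)=y_0$ and $$G(\tilde u(\tau))\,\tilde u'(\tau)=-\mathcal{P}_h\big(\nabla U(\tilde u(\cdot))\big)(\tau),\qquad \tau\in[0,1],$$ and set $y_1=\tilde u(1)$ (the FFED method). Then $U(y_1)\le U(y_0)$; i.e. the FFED method is energy-diminishing for every stepsize $h$.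
   Context: Function spaces: $Y_h$ is the set of $\mathbb{R}^d$-valued functions on $[0,1]$ of the form $\sum_{i=0}^{r-1}\tilde\varphi_i(\tau)W_i$ with $W_i\in\mathbb{R}^d$, where $\tilde\varphi_i(\tau)=\varphi_i(\tau h)$; $X_h$ is the set of $\mathbb{R}^d$-valued functions on $[0,1]$ of the form $W+\sum_{i=0}^{r-1}\big(\int_0^{\tau h}\varphi_i(s)\,ds\big)W_i$ with $W,W_i\in\mathbb{R}^d$. Equivalently $\tilde u(\tau)=u(\tau h)$ for $u$ in the space $X=\mathrm{span}\{1,\int_0^t\varphi_0,\ldots,\int_0^t\varphi_{r-1}\}$, and the notation $\tilde u'(\tau)$ means $u'(\tau h)=\frac1h\frac{d}{d\tau}\tilde u(\tau)$, which lies in $Y_h$. Projection: for a continuous $\tilde w:[0,1]\to\mathbb{R}^d$, $\mathcal{P}_h\tilde w$ is the unique element of $Y_h$ such that $\int_0^1\tilde v(\tau)\cdot\mathcal{P}_h\tilde w(\tau)\,d\tau=\int_0^1\tilde v(\tau)\cdot\tilde w(\tau)\,d\tau$ for all $\tilde v\in Y_h$, where $\cdot$ denotes entrywise multiplication of vectors (so each component of $\mathcal{P}_h\tilde w$ is the $L^2(0,1)$-orthogonal projection of the corresponding component of $\tilde w$ onto $\mathrm{span}\{\tilde\varphi_0,\ldots,\tilde\varphi_{r-1}\}$). Explicitly $\mathcal{P}_h\tilde w(\tau)=\int_0^1\sum_{i=0}^{r-1}\tilde\psi_i(\tau)\tilde\psi_i(\sigma)\tilde w(\sigma)\,d\sigma$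 with $\{\tilde\psi_i\}$ an $L^2(0,1)$-orthonormal basis of $\mathrm{span}\{\tilde\varphi_0,\ldots,\tilde\varphi_{r-1}\}$. *)

(* Defs.v *)
From HB Require Import structures.
From mathcomp Require Import all_boot all_order all_algebra.
From mathcomp Require Import all_classical all_reals all_analysis.
Set Implicit Arguments. Unset Strict Implicit. Unset Printing Implicit Defensive.
Import Order.TTheory GRing.Theory Num.Theory.
Import numFieldNormedType.Exports.
Local Open Scope classical_set_scope.
Local Open Scope ring_scope.

Definition grad (R : realType) (d : nat) (U : 'cV[R]_d -> R) (y : 'cV[R]_d)
  : 'cV[R]_d := \col_k 'D_(delta_mx k 0) U y.

Definition Yfun (R : realType) (d r : nat) (phi : 'I_r -> R -> R) (h : R)
  (W : 'I_r -> 'cV[R]_d) : R -> 'cV[R]_d :=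
  fun tau => \sum_(i < r) phi i (tau * h) *: W i.

Definition Xfun (R : realType) (d r : nat) (phi : 'I_r -> R -> R) (h : R)
  (W0 : 'cV[R]_d) (W : 'I_r -> 'cV[R]_d) : R -> 'cV[R]_d :=
  fun tau => W0 + \sum_(i < r)
     (\int[lebesgue_measure]_(s in `[0, tau * h]) phi i s) *: W i.

Definition in_Yh (R : realType) (d r : nat) (phi : 'I_r -> R -> R) (h : R)
  (v : R -> 'cV[R]_d) : Prop :=
  exists W : 'I_r -> 'cV[R]_d,
    forall tau : R, tau \in `[0, 1] -> v tau = Yfun phi h W tau.

Definition is_Ph (R : realType) (d r : nat) (phi : 'I_r -> R -> R) (h : R)
  (w p : R -> 'cV[R]_d) : Prop :=
  in_Yh phi h p /\
  forall v : R -> 'cV[R]_d, in_Yh phi h v ->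
    forall k : 'I_d,
      \int[lebesgue_measure]_(tau in `[0, 1]) (v tau k 0 * p tau k 0)
      = \int[lebesgue_measure]_(tau in `[0, 1]) (v tau k 0 * w tau k 0).

(* Main.v *)
From HB Require Import structures.
Require Import Defs.
From mathcomp Require Import all_boot all_order all_algebra.
From mathcomp Require Import all_classical all_reals all_analysis.
Set Implicit Arguments. Unset Strict Implicit. Unset Printing Implicit Defensive.
Import Order.TTheory GRing.Theory Num.Theory.
Import numFieldNormedType.Exports.
Local Open Scope classical_set_scope.
Local Open Scope ring_scope.

Section wc.
Context {R : realType}.

Lemma wcD (A : set R) (V : normedModType R) (f g : R -> V) :
  {within A, continuous f} -> {within A, continuous g} ->
  {within A, continuous (fun x => f x + g x)}.
Proof. by move=> hf hg x; apply: cvgD; [exact: hf|exact: hg]. Qed.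

Lemma wcM (A : set R) (f g : R -> R) :
  {within A, continuous f} -> {within A, continuous g} ->
  {within A, continuous (fun x => f x * g x)}.
Proof. by move=> hf hg x; apply: cvgM; [exact: hf|exact: hg]. Qed.

Lemma wcZ (A : set R) (V : normedModType R) (f : R -> R) (g : R -> V) :
  {within A, continuous f} -> {within A, continuous g} ->
  {within A, continuous (fun x => f x *: g x)}.
Proof. by move=> hf hg x; apply: cvgZ; [exact: hf|exact: hg]. Qed.

Lemma wc_cst (A : set R) (V : normedModType R) (c : V) :
  {within A, continuous (fun _ : R => c)}.
Proof. by move=> x; exact: cvg_cst. Qed.

Lemma wc_sum (A : set R) (V : normedModType R) n (f : 'I_n -> R -> V) :
  (forall i, {within A, continuous (f i)}) ->
  {within A, continuous (fun x => \sum_(i < n) f i x)}.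
Proof.
move=> hf; elim: n f hf => [|n IH] f hf.
  by under eq_fun do rewrite big_ord0; exact: wc_cst.
under eq_fun do rewrite big_ord_recr /=.
apply: wcD; last exact: hf.
exact: (IH (fun i => f (widen_ord (leqnSn n) i))).
Qed.

Lemma wc_comp (A : set R) (T : topologicalType) (W : topologicalType)
  (f : R -> T) (g : T -> W) :
  continuous g -> {within A, continuous f} -> {within A, continuous (fun x => g (f x))}.
Proof. by move=> cg cf; apply: (@within_continuous_comp _ _ _ A f g) => // y _; exact: cg. Qed.

End wc.
Lemma wc_comp_in {R : realType} (A B : set R) (f g : R -> R) :
  {within A, continuous f} -> (forall x, A x -> B (f x)) ->
  {within B, continuous g} -> {within A, continuous (fun x => g (f x))}.
Proof.
move=> /subspace_continuousP cf AB /subspace_continuousP cg.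
apply/subspace_continuousP => x Ax S /= gS.
have := cg _ (AB _ Ax) _ gS; rewrite /= => H1.
have := cf x Ax _ H1; rewrite /= /within /=.
rewrite /nbhs /= /within /=; apply: filterS => y H Ay; exact: (H Ay (AB _ Ay)).
Qed.

Lemma wc_int {R : realType} (f : R -> R) :
  {within `[0, 1], continuous f} ->
  (@lebesgue_measure R).-integrable `[0, 1] (EFin \o f).
Proof. by move=> cf; apply: continuous_compact_integrable => //; exact: segment_compact. Qed.

Lemma Rint_sum {R : realType} n (f : 'I_n -> R -> R) :
  (forall k, {within `[0, 1], continuous (f k)}) ->
  \int[@lebesgue_measure R]_(x in `[0, 1]) (\sum_(k < n) f k x)
  = \sum_(k < n) \int[@lebesgue_measure R]_(x in `[0, 1]) f k x.
Proof.
elim: n f => [|n IH] f hf.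
  by rewrite big_ord0; under eq_Rintegral do rewrite big_ord0;
     rewrite Rintegral_cst // mul0r.
under eq_Rintegral do rewrite big_ord_recr /=.
rewrite RintegralD //; last 2 first.
- apply: wc_int; apply: wc_sum => i; exact: hf.
- exact: wc_int.
rewrite big_ord_recr /=; congr (_ + _).
exact: (IH (fun i => f (widen_ord (leqnSn n) i))).
Qed.

Unset Implicit Arguments.
Set Strict Implicit.

Theorem theorem2p4 (R : realType) (d r : nat) (T h : R)
  (U : 'cV[R]_d -> R) (G : 'cV[R]_d -> 'M[R]_d) (Gam : 'M[R]_d)
  (phi : 'I_r -> R -> R) (y0 W0 : 'cV[R]_d) (W : 'I_r -> 'cV[R]_d) :
  (0 < d)%N ->
  0 < T ->
  (forall y, differentiable U y) ->
  continuous (grad U) ->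
  continuous G ->
  (forall y, (G y)^T = G y) ->
  Gam^T = Gam ->
  (forall v : 'cV[R]_d, v != 0 -> 0 < (v^T *m Gam *m v) 0 0) ->
  (forall (y v : 'cV[R]_d), v != 0 ->
      (v^T *m Gam *m v) 0 0 <= (v^T *m G y *m v) 0 0) ->
  (forall i, {within `[0, T], continuous (phi i)}) ->
  (forall c : 'I_r -> R,
      (forall t, t \in `[0, T] -> \sum_(i < r) c i * phi i t = 0) ->
      forall i, c i = 0) ->
  0 < h -> h <= T ->
  Xfun phi h W0 W 0 = y0 ->
  (exists p : R -> 'cV[R]_d,
      is_Ph phi h (fun tau => grad U (Xfun phi h W0 W tau)) p /\
      forall tau, tau \in `[0, 1] ->
        G (Xfun phi h W0 W tau) *m Yfun phi h W tau = - p tau) ->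
  U (Xfun phi h W0 W 1) <= U y0.
Proof.
move=> d0 T0 dU cgrad cG Gsym Gamsym Gpos GGam cphi _ h0 hT X0 [p [[_ pP] peq]].
set u := Xfun phi h W0 W.
set Y := Yfun phi h W.
pose F i t := \int[@lebesgue_measure R]_(s in `[0, t]) phi i s.
have uE : u = fun tau => W0 + \sum_(i < r) F i (tau * h) *: W i by [].
have YE : Y = fun tau => \sum_(i < r) phi i (tau * h) *: W i by [].
have intphi i : (@lebesgue_measure R).-integrable `[0, T] (EFin \o phi i).
  by apply: continuous_compact_integrable => //; exact: segment_compact.
have cF i : {within `[0, T], continuous (F i)}.
  exact: (@parameterized_integral_continuous R 0 T (phi i) (ltW T0) (intphi i)).
have dF i t : 0 < t < T -> derivable (F i) t 1 /\ derive1 (F i) t = phi i t.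
  move=> /andP[t0 tT].
  apply: (@continuous_FTC1_closed R (phi i) 0 t T tT (intphi i) t0).
  have [+ _ _] := (continuous_within_itvP _ T0).1 (cphi i).
  by apply; rewrite in_itv /= t0 tT.
have mapI : forall tau : R, [set` `[0, 1]] tau -> [set` `[0, T]] (tau * h).
  move=> tau; rewrite /= !in_itv /= => /andP[t0 t1].
  rewrite mulr_ge0 ?(ltW h0) //=.
  apply: le_trans hT; rewrite -[leRHS]mul1r; by rewrite ler_wpM2r // ltW.
have cmul : {within `[0, 1], continuous (fun tau : R => tau * h)}.
  apply: wcM; last exact: wc_cst.
  by apply: continuous_subspaceT => x; exact: cvg_id.
have cPhi i : {within `[0, 1], continuous (fun tau => phi i (tau * h))}.
  exact: wc_comp_in cmul mapI (cphi i).
have cPsi i : {within `[0, 1], continuous (fun tau => F i (tau * h))}.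
  exact: wc_comp_in cmul mapI (cF i).
have cu : {within `[0, 1], continuous u}.
  rewrite uE; apply: wcD; first exact: wc_cst.
  apply: wc_sum => i; apply: wcZ; [exact: cPsi|exact: wc_cst].
have cY : {within `[0, 1], continuous Y}.
  rewrite YE; apply: wc_sum => i; apply: wcZ; [exact: cPhi|exact: wc_cst].
have cU : continuous U by move=> y; exact: differentiable_continuous.
have cgu : {within `[0, 1], continuous (fun tau => U (u tau))}.
  exact: wc_comp cU cu.
have cYk k : {within `[0, 1], continuous (fun tau => Y tau k 0)}.
  exact: wc_comp (@coord_continuous R d 1 k 0) cY.
have cgk k : {within `[0, 1], continuous (fun tau => grad U (u tau) k 0)}.
  apply: wc_comp (@coord_continuous R d 1 k 0) _.
  exact: wc_comp cgrad cu.
pose f tau := h * \sum_(k < d) (Y tau k 0 * grad U (u tau) k 0).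
have cf : {within `[0, 1], continuous f}.
  apply: wcM; first exact: wc_cst.
  apply: wc_sum => k; apply: wcM; [exact: cYk|exact: cgk].
have der : forall tau, 0 < tau < 1 ->
    derivable (fun tau => U (u tau)) tau 1 /\ derive1 (fun tau => U (u tau)) tau = f tau.
  move=> tau /andP[t0 t1].
  have tI : 0 < tau * h < T.
    rewrite mulr_gt0 //=; apply: lt_le_trans hT.
    by rewrite -[ltRHS]mul1r ltr_pM2r.
  have dm : derivable (fun s : R => s * h) tau 1.
    have := @derivableM R R id (cst h) tau 1.
    by move=> H; apply: H; [exact: derivable_id|exact: derivable_cst].
  have dm' : derive1 (fun s : R => s * h) tau = h.
    rewrite (@derive1Mr R id tau h); last exact: (@derivable_id R R).
    by rewrite derive1E derive_id mul1r.
  have dPsi i : derivable (fun s : R => F i (s * h)) tau 1 /\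
      derive1 (fun s : R => F i (s * h)) tau = phi i (tau * h) * h.
    have [dFi dFi'] := dF i _ tI.
    split.
      apply/derivable1_diffP.
      apply: (@differentiable_comp R R R R (fun s : R => s * h) (F i) tau).
        exact/derivable1_diffP.
      exact/derivable1_diffP.
    rewrite (@derive1_comp R (fun s : R => s * h) (F i)) //.
    by rewrite dFi' dm'.
  have dZ i : is_derive tau (1 : R) (fun s : R => F i (s * h) *: W i)
      ((phi i (tau * h) * h) *: W i).
    have [dp dp'] := dPsi i.
    have dd : differentiable (fun s : R => F i (s * h)) tau by exact/derivable1_diffP.
    have dd2 : differentiable (fun s : R => F i (s * h) *: W i) tau.
      exact: differentiableZl.
    apply: DeriveDef; first exact: diff_derivable.
    rewrite deriveE // diffZl // -derive1E' //.
    by rewrite dp'.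
  have uE2 : u = cst W0 + \sum_(i < r) (fun s : R => F i (s * h) *: W i).
    by rewrite uE fct_sumE; apply/funext => s.
  have du : is_derive tau (1 : R) u (h *: Y tau).
    rewrite uE2; apply: is_derive_eq.
    rewrite add0r YE /= scaler_sumr; apply: eq_bigr => i _.
    by rewrite scalerA mulrC.
  have dud : differentiable u tau.
    apply/derivable1_diffP; exact: ex_derive.
  have dg : differentiable (U \o u) tau.
    exact: differentiable_comp.
  split; first exact/derivable1_diffP.
  rewrite -[(fun tau => U (u tau))]/(U \o u).
  rewrite derive1E' // diff_comp //= -derive1E' // derive1E derive_val.
  have vE : h *: Y tau = \sum_(k < d) (h *: Y tau) k 0 *: delta_mx k 0.
    rewrite [LHS]matrix_sum_delta; apply: eq_bigr => k _.
    by rewrite big_ord1.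
  rewrite vE linear_sum /f mulr_sumr; apply: eq_bigr => k _.
  rewrite linearZ /= /grad !mxE deriveE // mulrA.
  done.
have dgoo : derivable_oo_LRcontinuous (fun tau => U (u tau)) 0 1.
  have [_ l0 l1] := (continuous_within_itvP _ ltr01).1 cgu.
  split => // x; rewrite in_itv /= => hx; exact: (der x hx).1.
have der' : {in `]0, 1[, derive1 (fun tau => U (u tau)) =1 f}.
  by move=> x; rewrite in_itv /= => hx; exact: (der x hx).2.
have FTC := continuous_FTC2 ltr01 cf dgoo der'.
have key : U (u 1) - U (u 0) = \int[@lebesgue_measure R]_(x in `[0, 1]) f x.
  by rewrite /Rintegral FTC -EFinB.
have cGY k : {within `[0, 1], continuous (fun x => (G (u x) *m Y x) k 0)}.
  have -> : (fun x => (G (u x) *m Y x) k 0) =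
      fun x => \sum_(j < d) G (u x) k j * Y x j 0.
    by apply/funext => x; rewrite mxE.
  apply: wc_sum => j; apply: wcM; last exact: cYk.
  apply: wc_comp (@coord_continuous R d d k j) _.
  exact: wc_comp cG cu.
have qge0 : forall x, [set` `[0, 1]] x ->
    0 <= \sum_(k < d) (Y x k 0 * (G (u x) *m Y x) k 0).
  move=> x _.
  have -> : \sum_(k < d) (Y x k 0 * (G (u x) *m Y x) k 0) =
      ((Y x)^T *m G (u x) *m Y x) 0 0.
      rewrite -mulmxA mxE; apply: eq_bigr => k _; rewrite [in RHS]mxE; congr (_ * _); by rewrite mxE.
  have [->|v0] := eqVneq (Y x) 0.
    by rewrite !mulmx0 mxE.
  apply: ltW; apply: lt_le_trans (GGam _ _ v0); exact: Gpos.
have intE : \int[@lebesgue_measure R]_(x in `[0, 1]) f x =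
    h * - \int[@lebesgue_measure R]_(x in `[0, 1])
            (\sum_(k < d) (Y x k 0 * (G (u x) *m Y x) k 0)).
  rewrite /f RintegralZl //; last first.
    apply: wc_int; apply: wc_sum => k; apply: wcM; [exact: cYk|exact: cgk].
  congr (_ * _).
  rewrite Rint_sum; last by move=> k; apply: wcM; [exact: cYk|exact: cgk].
  rewrite Rint_sum; last by move=> k; apply: wcM; [exact: cYk|exact: cGY].
  rewrite -sumrN; apply: eq_bigr => k _.
  have inY : in_Yh phi h Y by exists W.
  rewrite -(pP Y inY k).
  transitivity (\int[@lebesgue_measure R]_(x in `[0, 1])
       (-1 * (Y x k 0 * (G (u x) *m Y x) k 0))).
    apply: eq_Rintegral => x xI.
    have := peq x (set_mem xI) => /(congr1 (fun M => - M)); rewrite opprK => <-.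
    by rewrite mxE mulN1r mulrN.
  rewrite RintegralZl //; first by rewrite mulN1r.
  apply: wc_int; apply: wcM; [exact: cYk|exact: cGY].
rewrite -X0 -subr_le0 key intE mulrN oppr_le0.
apply: mulr_ge0; first exact: ltW.
exact: Rintegral_ge0.
Qed.
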